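(* Let $f:\mathbb{R}\to\mathbb{R}$, $x:\mathbb{R}$ and $n\in\mathbb{N}$. Then for all $d_1,\dots,d_n:D$, \[ f\big(x+\mathrm{Sym}_{n,1}(d_1,\dots,d_n)\big)=\sum_{i=0}^{n} f^{(i)}(x)\,\mathrm{Sym}_{n,i}(d_1,\dots,d_n). \]
   Context: Homotopy type theory setting. $\mathbb{R}$ is a set with a commutative unitary ring structure (a $\mathbb{Q}$-algebra), $D:=\{d:\mathbb{R}\mid d^2=0\}$, and the axiom holds that for every $g:D\to\mathbb{R}$ there is a unique $a:\mathbb{R}$ with $g(d)=g(0)+ad$ for all $d:D$. Consequently for each $f:\mathbb{R}\to\mathbb{R}$ there is a unique $f':\mathbb{R}\to\mathbb{R}$ with $f(x+d)=f(x)+f'(x)d$ for all $x:\mathbb{R}$, $d:D$; $f^{(0)}:=f$, $f^{(i+1)}:=(f^{(i)})'$. The functions $\mathrm{Sym}_{n,m}:D^n\to\mathbb{R}$ are defined by $\mathrm{Sym}_{0,0}:=1$, $\mathrm{Sym}_{0,m+1}:=0$, $\mathrm{Sym}_{n+1,0}:=1$, and $\mathrm{Sym}_{n+1,m+1}(d_1,\dots,d_{n+1}):=\mathrm{Sym}_{n,m+1}(d_1,\dots,d_n)+d_{n+1}\mathrm{Sym}_{n,m}(d_1,\dots,d_n)$. *)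

(* Defs.v *)
(* the number line R of synthetic differential
   geometry must NOT have decidable equality (every MathComp ring is an eqType,
   which together with the Kock-Lawvere axiom would collapse R), so we use a
   bare commutative-ring record over an arbitrary Type. *)
From Stdlib Require Import Arith.
Set Implicit Arguments.

Record QAlg := {
  car :> Type;
  rzero : car;
  rone : car;
  radd : car -> car -> car;
  rmul : car -> car -> car;
  ropp : car -> car;
  raddA : forall x y z, radd x (radd y z) = radd (radd x y) z;
  raddC : forall x y, radd x y = radd y x;
  radd0 : forall x, radd rzero x = x;
  raddN : forall x, radd (ropp x) x = rzero;
  rmulA : forall x y z, rmul x (rmul y z) = rmul (rmul x y) z;
  rmulC : forall x y, rmul x y = rmul y x;
  rmul1 : forall x, rmul rone x = x;
  rmulDl : forall x y z, rmul (radd x y) z = radd (rmul x z) (rmul y z);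
  rnat_inv : forall n : nat,
      exists y, rmul (Nat.iter (S n) (radd rone) rzero) y = rone
}.

Arguments rzero {_}. Arguments rone {_}.
Arguments radd {_} _ _. Arguments rmul {_} _ _. Arguments ropp {_} _.

Section Defs.
Variable R : QAlg.

Definition inD (d : R) : Prop := rmul d d = rzero.

Lemma inD0 : inD rzero.
Proof.
  unfold inD.
  assert (H : rmul (@rzero R) rzero = radd (rmul rzero rzero) (rmul rzero rzero)).
  { rewrite <- rmulDl, radd0. reflexivity. }
  assert (H2 := f_equal (radd (ropp (rmul (@rzero R) rzero))) H).
  rewrite raddN, raddA, raddN, radd0 in H2. symmetry; exact H2.
Qed.

Definition D0 : {d : R | inD d} := exist _ rzero inD0.

Definition KockLawvere : Prop :=
  forall g : {d : R | inD d} -> R,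
  exists a : R, (forall d : {d : R | inD d},
                   g d = radd (g D0) (rmul a (proj1_sig d)))
     /\ forall b : R, (forall d : {d : R | inD d},
                   g d = radd (g D0) (rmul b (proj1_sig d))) -> b = a.

Definition is_deriv (f g : R -> R) : Prop :=
  forall x d : R, inD d -> f (radd x d) = radd (f x) (rmul (g x) d).

(** Sym_{n,m}(d_1,...,d_n); the infinitesimal d_{k+1} is  d k. *)
Fixpoint Sym (n m : nat) (d : nat -> R) : R :=
  match n, m with
  | O, O => rone
  | O, S _ => rzero
  | S _, O => rone
  | S n', S m' => radd (Sym n' (S m') d) (rmul (d n') (Sym n' m' d))
  end.

Fixpoint sumR (F : nat -> R) (n : nat) : R :=
  match n with
  | O => F O
  | S n' => radd (sumR F n') (F (S n'))
  end.
End Defs.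
Arguments inD {R} d. Arguments is_deriv {R} f g. Arguments Sym {R} n m d.
Arguments sumR {R} F n. Arguments KockLawvere R : clear implicits.

(* Main.v *)
Require Import Defs.
From Stdlib Require Import Arith Ring Lia.

Section Aux.
Variable R : QAlg.

Definition rsub (x y : R) := radd x (ropp y).

Lemma QAlg_ring : ring_theory (@rzero R) rone radd rmul rsub ropp (@eq R).
Proof.
  constructor.
  - exact (@radd0 R).
  - exact (@raddC R).
  - exact (@raddA R).
  - exact (@rmul1 R).
  - exact (@rmulC R).
  - exact (@rmulA R).
  - exact (@rmulDl R).
  - reflexivity.
  - intro x. rewrite raddC. apply raddN.
Qed.

Add Ring QAring : QAlg_ring.

Lemma sumR_ext (F G : nat -> R) n : (forall i, F i = G i) -> sumR F n = sumR G n.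
Proof. intro H; induction n; simpl; rewrite ?IHn, ?H; reflexivity. Qed.

Lemma sumR_add (F G : nat -> R) n :
  sumR (fun i => radd (F i) (G i)) n = radd (sumR F n) (sumR G n).
Proof. induction n; simpl; [reflexivity|]. rewrite IHn. ring. Qed.

Lemma sumR_scal (c : R) (F : nat -> R) n :
  sumR (fun i => rmul c (F i)) n = rmul c (sumR F n).
Proof. induction n; simpl; [reflexivity|]. rewrite IHn. ring. Qed.

Lemma sumR_shift (F : nat -> R) n :
  sumR F (S n) = radd (F O) (sumR (fun i => F (S i)) n).
Proof. induction n; simpl in *; [reflexivity|]. rewrite IHn. ring. Qed.

Lemma Sym_0 n (d : nat -> R) : Sym n 0 d = rone.
Proof. destruct n; reflexivity. Qed.

Lemma Sym_big n (d : nat -> R) : forall m, n < m -> Sym n m d = rzero.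
Proof.
  induction n; intros m Hm; destruct m; try (exfalso; lia); simpl; try reflexivity.
  rewrite !IHn by lia. ring.
Qed.

Lemma main (fd : nat -> R -> R) (fdS : forall i : nat, is_deriv (fd i) (fd (S i)))
  (x : R) (d : nat -> R) : forall n, (forall k, k < n -> inD (d k)) ->
  forall k, fd k (radd x (Sym n 1 d)) = sumR (fun i => rmul (fd (k+i) x) (Sym n i d)) n.
Proof.
  induction n; intros hd k.
  - simpl. rewrite Nat.add_0_r. replace (radd x rzero) with x by ring. ring.
  - change (Sym (S n) 1 d) with (radd (Sym n 1 d) (rmul (d n) (Sym n 0 d))).
    rewrite Sym_0.
    replace (radd x (radd (Sym n 1 d) (rmul (d n) rone)))
      with (radd (radd x (Sym n 1 d)) (d n)) by ring.
    rewrite (fdS k) by (apply hd; lia).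
    rewrite !IHn by (intros; apply hd; lia).
    rewrite sumR_shift.
    rewrite (sumR_ext (fun i => rmul (fd (k + S i) x) (Sym (S n) (S i) d)) (fun i => radd (rmul (fd (k + S i) x) (Sym n (S i) d))
                                  (rmul (d n) (rmul (fd (S k + i) x) (Sym n i d))))).
    2:{ intro i. change (Sym (S n) (S i) d) with (radd (Sym n (S i) d) (rmul (d n) (Sym n i d))). rewrite Nat.add_succ_r, Nat.add_succ_l. ring. }
    rewrite sumR_add, sumR_scal.
    assert (E : sumR (fun i => rmul (fd (k + i) x) (Sym n i d)) n =
      radd (rmul (fd (k + 0) x) (Sym (S n) 0 d))
           (sumR (fun i => rmul (fd (k + S i) x) (Sym n (S i) d)) n)).
    { transitivity (sumR (fun i => rmul (fd (k + i) x) (Sym n i d)) (S n)).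
      - simpl. rewrite (Sym_big n d (S n)) by lia. ring.
      - rewrite sumR_shift. rewrite !Sym_0. reflexivity. }
    rewrite E. ring.
Qed.
End Aux.

Theorem theorem2p1 (R : QAlg) (KL : KockLawvere R)
  (f : R -> R) (fd : nat -> R -> R)
  (fd0 : fd O = f) (fdS : forall i : nat, is_deriv (fd i) (fd (S i)))
  (x : R) (n : nat) (d : nat -> R) (hd : forall k : nat, k < n -> inD (d k)) :
  f (radd x (Sym n 1 d)) = sumR (fun i => rmul (fd i x) (Sym n i d)) n.
Proof.
  rewrite <- fd0. exact (main R fd fdS x d n hd 0).
Qed.
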